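(* Let $k\ge1$ be an integer, $G=(V,E)$ a $k$-perfectly orientable graph with certifying orientation $H$, and $Q$ the polytope \[ Q=\Big\{x\in[0,1]^V:\ x_v+\sum_{u\in N^+_H(v)}x_u\le k\ \text{ for all } v\in V\Big\}. \] For each $b\in[0,1]$: there is a deterministic, oblivious, monotone $(b/k,\,1-b)$-balanced contention resolution scheme for $Q$ (with respect to the independent sets of $G$), and there is a randomized monotone $(b/k,\,e^{-b})$-balanced contention resolution scheme for $Q$.
   Context: $\mathcal{I}$ denotes the family of independent sets of $G$; $\alpha(G')$ is the maximum size of an independent set of a graph $G'$. $G$ is $k$-perfectly orientable if there is an orientation $H=(V,A)$ of $G$ with $\alpha(G[N^+_H(v)])\le k$ for all $v$, where $N^+_H(v)=\{u:(v,u)\in A\}$. For $x\in[0,1]^V$, $R(x)$ denotes a random subset of $V$ containing each $v$ independently with probability $x_v$, and $\mathrm{support}(x)=\{v:x_v>0\}$; for $b\in[0,1]$, $bQ=\{bx:x\in Q\}$. For $b,c\in[0,1]$, a $(b,c)$-balanced contention resolution (CR) scheme $\pi$ for $Q$ is a procedure that for every $x\in bQ$ and $A\subseteq V$ returns a (possibly random) set $\pi_x(A)\subseteq A\cap\mathrm{support}(x)$ such that (i) $\pi_x(A)\in\mathcal{I}$ with probability 1 for all $A\subseteq V$, $x\in bQ$, and (ii) for all $x\in bQ$ and all $i\in\mathrm{support}(x)$, $\Pr[i\in\pi_x(R(x))\mid i\in R(x)]\ge c$. The scheme is monotone if $\Pr[i\in\pi_x(A_1)]\ge\Pr[i\in\pi_x(A_2)]$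 whenever $i\in A_1\subseteq A_2$; deterministic if $\pi$ is a deterministic algorithm; oblivious if it is deterministic and $\pi_x(A)=\pi_y(A)$ for all $x,y,A$. *)

(* Defs.v *)
From HB Require Import structures.
From mathcomp Require Import all_boot all_order all_algebra.
From mathcomp Require Import reals sequences exp.
Set Implicit Arguments. Unset Strict Implicit. Unset Printing Implicit Defensive.
Import Order.TTheory GRing.Theory Num.Theory.
Local Open Scope ring_scope.

Section Defs.
Variables (V : finType).

Definition simple_graph (e : rel V) : Prop :=
  (forall u v, e u v = e v u) /\ (forall v, ~~ e v v).

Definition orientation (e a : rel V) : Prop :=
  (forall u v, a u v -> e u v) /\ (forall u v, e u v -> a u v != a v u).

Definition independent (e : rel V) (S : {set V}) : bool :=
  [forall u in S, forall v in S, ~~ e u v].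

Definition alpha_induced (e : rel V) (N : {set V}) : nat :=
  \max_(S : {set V} | (S \subset N) && independent e S) #|S|.

Definition Nout (a : rel V) (v : V) : {set V} := [set u | a v u].

Definition certifying_orientation (e a : rel V) (k : nat) : Prop :=
  orientation e a /\ forall v, (alpha_induced e (Nout a v) <= k)%N.

Variable R : realType.

Definition polyQ (a : rel V) (k : nat) (x : V -> R) : Prop :=
  (forall v, 0 <= x v <= 1) /\
  (forall v, x v + \sum_(u in Nout a v) x u <= k%:R).

Definition scaleP (b : R) (P : (V -> R) -> Prop) (x : V -> R) : Prop :=
  exists y, P y /\ forall v, x v = b * y v.

Definition support (x : V -> R) : {set V} := [set v | 0 < x v].

(* Pr[R(x) = A] *)
Definition probR (x : V -> R) (A : {set V}) : R :=
  (\prod_(v in A) x v) * \prod_(v in ~: A) (1 - x v).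

(* A (possibly randomized) scheme: pi x A S = Pr[pi_x(A) = S]. *)
Definition scheme := (V -> R) -> {set V} -> {set V} -> R.

Definition prIn (pi : scheme) (x : V -> R) (A : {set V}) (i : V) : R :=
  \sum_(S : {set V} | i \in S) pi x A S.

Definition balanced_CR (e : rel V) (P : (V -> R) -> Prop) (b c : R)
    (pi : scheme) : Prop :=
  (forall x A, scaleP b P x ->
     (forall S, 0 <= pi x A S) /\ \sum_(S : {set V}) pi x A S = 1) /\
  (forall x A S, scaleP b P x -> pi x A S != 0 ->
     (S \subset A :&: support x) && independent e S) /\
  (* Pr[i \in pi_x(R(x)) | i \in R(x)] >= c *)
  (forall x i, scaleP b P x -> i \in support x ->
     (\sum_(A : {set V} | i \in A) probR x A * prIn pi x A i) / x i >= c).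

Definition monotone_scheme (b : R) (P : (V -> R) -> Prop) (pi : scheme) : Prop :=
  forall x (A1 A2 : {set V}) i, scaleP b P x -> i \in A1 -> A1 \subset A2 ->
    prIn pi x A1 i >= prIn pi x A2 i.

Definition deterministic_scheme (b : R) (P : (V -> R) -> Prop) (pi : scheme) : Prop :=
  forall x A, scaleP b P x ->
    exists T : {set V}, forall S, pi x A S = (S == T)%:R.

Definition oblivious_scheme (b : R) (P : (V -> R) -> Prop) (pi : scheme) : Prop :=
  deterministic_scheme b P pi /\
  forall x y (A : {set V}), scaleP b P x -> scaleP b P y ->
    A \subset support x -> A \subset support y -> pi x A =1 pi y A.

End Defs.

(* Main.v *)
Require Import Defs.
From HB Require Import structures.
From mathcomp Require Import all_boot all_order all_algebra.
From mathcomp Require Import reals sequences exp.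
From mathcomp Require Import ring lra.
Import Order.TTheory GRing.Theory Num.Theory.
Local Open Scope ring_scope.
Set Implicit Arguments. Unset Strict Implicit.

Section Gen.
Variables (R : realType) (V : finType).

Lemma sum_prod (F : V -> bool -> R) :
  \sum_(A : {set V}) \prod_v F v (v \in A) = \prod_v (F v true + F v false).
Proof.
transitivity (\prod_v \sum_(j : bool) F v j).
  rewrite bigA_distr_bigA /=.
  rewrite (reindex (fun A : {set V} => [ffun v => v \in A])) /=.
    by apply: eq_bigr => A _; apply: eq_bigr => v _; rewrite ffunE.
  exists (fun f : {ffun V -> bool} => [set v | f v]) => f _.
    by apply/setP => v; rewrite inE ffunE.
  by apply/ffunP => v; rewrite ffunE inE.
by apply: eq_bigr => v _; rewrite big_bool.
Qed.

Lemma probRE (x : V -> R) A :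
  probR x A = \prod_v (if v \in A then x v else 1 - x v).
Proof.
rewrite /probR [RHS](bigID (mem A)) /=; congr (_ * _).
  by apply: eq_bigr => v ->.
apply: eq_big => [v|v]; first by rewrite inE.
by rewrite inE => /negbTE ->.
Qed.

Definition wt (m : V -> R) (D M : {set V}) : R :=
  \prod_v (if v \in M then (if v \in D then m v else 0)
           else (if v \in D then 1 - m v else 1)).

Variable a : rel V.
Hypothesis airr : forall v, ~~ a v v.

Definition keep (M : {set V}) : {set V} :=
  [set i in M | [forall u, a i u ==> (u \notin M)]].

Definition gpi (m : (V -> R) -> V -> R) : scheme V R :=
  fun x A S => \sum_(M : {set V}) wt (m x) (A :&: Defs.support x) M * (S == keep M)%:R.

Variable m : (V -> R) -> V -> R.
Hypothesis m01 : forall x v, 0 <= m x v <= 1.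

Lemma wt_ge0 x D M : 0 <= wt (m x) D M.
Proof.
apply: prodr_ge0 => v _; have /andP[h0 h1] := m01 x v.
by do 2 case: ifP => _ //; rewrite subr_ge0.
Qed.

Lemma gpi_ge0 x A S : 0 <= gpi m x A S.
Proof. by apply: sumr_ge0 => M _; rewrite mulr_ge0 ?wt_ge0 ?ler0n. Qed.

Lemma sum_ind (T : {set V}) : \sum_(S : {set V}) (S == T)%:R = 1 :> R.
Proof.
rewrite (bigD1 T) //= eqxx big1 ?addr0 // => S /negbTE -> //.
Qed.

Lemma gpi_sum1 x A : \sum_(S : {set V}) gpi m x A S = 1.
Proof.
rewrite /gpi exchange_big /=.
transitivity (\sum_(M : {set V}) wt (m x) (A :&: Defs.support x) M).
  by apply: eq_bigr => M _; rewrite -mulr_sumr sum_ind mulr1.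
rewrite /wt (sum_prod (fun v b => if b then (if v \in A :&: Defs.support x then m x v else 0)
   else (if v \in A :&: Defs.support x then 1 - m x v else 1))).
apply: big1 => v _.
by case: ifP => _; rewrite ?addr0 ?add0r // addrC subrK.
Qed.


Definition gfac (i v : V) (b : bool) : R :=
  if v == i then (if b then 1 else 0) else if a i v then (if b then 0 else 1) else 1.

Lemma keep_ind i M : (i \in keep M)%:R = \prod_v gfac i v (v \in M).
Proof.
have [ik|nik] := boolP (i \in keep M).
  move: (ik); rewrite inE => /andP[iM /forallP fa].
  symmetry; apply: big1 => v _; rewrite /gfac.
  case: eqP => [->|_]; first by rewrite iM.
  by case: ifP => // aiv; move: (fa v); rewrite aiv /= => /negbTE ->.
move: nik; rewrite inE negb_and => /orP[niM|].
  by rewrite (bigD1 i) //= /gfac eqxx (negbTE niM) /= mul0r.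
move/forallPn => [u]; rewrite negb_imply negbK => /andP[aiu uM].
have ui : u != i by apply: contraTneq aiu => ->; exact: airr.
by rewrite (bigD1 u) //= /gfac (negbTE ui) aiu uM /= mul0r.
Qed.

Lemma sum_ind_in (T : {set V}) i :
  \sum_(S : {set V} | i \in S) (S == T)%:R = (i \in T)%:R :> R.
Proof.
rewrite big_mkcond (bigD1 T) //= eqxx big1 ?addr0 //.
  by case: ifP.
by move=> S /negbTE ->; case: ifP.
Qed.

Definition hfac x (D : {set V}) i v : R :=
  if v == i then (if i \in D then m x i else 0)
  else if a i v then (if v \in D then 1 - m x v else 1) else 1.

Lemma prIn_gpi x A i :
  prIn (gpi m) x A i = \prod_v hfac x (A :&: Defs.support x) i v.
Proof.
set D := A :&: Defs.support x.
rewrite /prIn /gpi exchange_big /=.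
transitivity (\sum_(M : {set V}) wt (m x) D M * (i \in keep M)%:R).
  by apply: eq_bigr => M _; rewrite -mulr_sumr sum_ind_in.
pose F := fun v b => (if b then (if v \in D then m x v else 0)
   else (if v \in D then 1 - m x v else 1)) * gfac i v b.
transitivity (\sum_(M : {set V}) \prod_v F v (v \in M)).
  by apply: eq_bigr => M _; rewrite keep_ind /wt -big_split.
rewrite sum_prod /F; apply: eq_bigr => v _.
rewrite /hfac /gfac; case: eqP => [->|_].
  by rewrite mulr1 mulr0 addr0.
case: (a i v); first by rewrite mulr0 add0r mulr1.
by rewrite !mulr1; case: ifP => _; rewrite ?addr0 ?add0r // addrC subrK.
Qed.


Lemma gpi_mono x (A1 A2 : {set V}) i : i \in A1 -> A1 \subset A2 ->
  prIn (gpi m) x A2 i <= prIn (gpi m) x A1 i.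
Proof.
move=> iA1 sA; rewrite !prIn_gpi; apply: ler_prod => v _.
rewrite /hfac /=; case: (v =P i) => [E|/eqP vi]; first subst v.
  have /andP[h0 h1] := m01 x i.
  rewrite !in_setI iA1 (subsetP sA _ iA1) /=.
  by case: ifP => _; rewrite ?lexx ?h0.
have /andP[h0 h1] := m01 x v.
have h2 : 0 <= 1 - m x v by rewrite subr_ge0.
have h3 : 1 - m x v <= 1 by rewrite lerBlDr lerDl.

case: (a i v); last by rewrite ler01 lexx.
rewrite !in_setI; case: (boolP (v \in A1)) => vA1 /=.
  by rewrite (subsetP sA _ vA1) /=; case: ifP => _; rewrite ?h2 ?lexx ?ler01.
by case: ifP => _; rewrite ?h2 ?h3 ?lexx ?ler01.
Qed.

Lemma gpi_cond x i : (forall v, 0 <= x v) -> i \in Defs.support x ->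
  \sum_(A : {set V} | i \in A) probR x A * prIn (gpi m) x A i
  = x i * m x i * \prod_(v | a i v) (1 - x v * m x v).
Proof.
move=> x0 iS.
transitivity (\sum_(A : {set V}) probR x A * prIn (gpi m) x A i).
  rewrite big_mkcond; apply: eq_bigr => A _; case: ifP => // iA.
  rewrite prIn_gpi (bigD1 i) //= /hfac eqxx in_setI iA /=.
  by rewrite mul0r mulr0.
pose G := fun v b => (if b then x v else 1 - x v) *
  (if v == i then (if b && (i \in Defs.support x) then m x i else 0)
   else if a i v then (if b && (v \in Defs.support x) then 1 - m x v else 1) else 1).
transitivity (\sum_(A : {set V}) \prod_v G v (v \in A)).
  apply: eq_bigr => A _; rewrite probRE prIn_gpi -big_split.
  by apply: eq_bigr => v _; rewrite /G /hfac !in_setI; case: eqP => [->|].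
rewrite sum_prod /G.
transitivity (\prod_v (if v == i then x i * m x i else
                if a i v then 1 - x v * m x v else 1)).
  apply: eq_bigr => v _; case: eqP => [->|_] /=.
    by rewrite iS mulr0 addr0.
  case: (a i v) => /=; last by rewrite !mulr1 addrC subrK.
  case: (boolP (v \in Defs.support x)) => vS /=; first by ring.
  have -> : x v = 0.
    by apply/eqP; rewrite eq_le x0 andbT leNgt; move: vS; rewrite inE.
  by ring.
rewrite (bigD1 i) //= eqxx; congr (_ * _).
rewrite big_mkcond [RHS]big_mkcond; apply: eq_bigr => v _ /=.
case: eqP => [->|_] /=; first by rewrite (negbTE (airr i)).
by case: (a i v).
Qed.

End Gen.

Section Main.
Variables (R : realType) (V : finType) (e a : rel V).

Lemma weier (x : V -> R) (r : seq V) (P : pred V) :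
  (forall v, 0 <= x v <= 1) ->
  1 - \sum_(v <- r | P v) x v <= \prod_(v <- r | P v) (1 - x v).
Proof.
move=> x01; elim: r => [|u r IH]; first by rewrite !big_nil subr0.
rewrite !big_cons; case: (P u) => //.
have S0 : 0 <= \sum_(v <- r | P v) x v by apply: sumr_ge0 => v _; case/andP: (x01 v).
have /andP[h0 h1] := x01 u.
set S := \sum_(v <- r | P v) x v in S0 IH *.
set Pr := \prod_(v <- r | P v) (1 - x v) in IH *.
nra.
Qed.

Lemma gpi_valid (m : (V -> R) -> V -> R) x A S :
  orientation e a -> (forall v, ~~ a v v) -> (forall x v, 0 <= m x v <= 1) ->
  gpi a m x A S != 0 ->
  (S \subset A :&: Defs.support x) && independent e S.
Proof.
move=> [ae aor] airr m01 /eqP nz.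
have [M /andP[_ pos]] := psumr_neq0P (fun M _ => mulr_ge0 (wt_ge0 m01 x _ M) (ler0n _ _)) nz.
have SM : S = keep a M.
  by apply/eqP; move: pos; case: eqP => // _; rewrite mulr0 ltxx.
have wM : wt (m x) (A :&: Defs.support x) M != 0.
  by apply: contraTneq pos => ->; rewrite mul0r ltxx.
have MD : M \subset A :&: Defs.support x.
  apply/subsetP => v vM; apply/negPn/negP => vD; move: wM.
  by rewrite /wt (bigD1 v) //= vM (negbTE vD) mul0r eqxx.
have kM : keep a M \subset M by apply/subsetP => v; rewrite inE => /andP[].
rewrite SM (subset_trans kM MD) /=.
apply/forallP => u; apply/implyP => uk; apply/forallP => v; apply/implyP => vk.
apply/negP => euv; have := aor u v euv.
move: uk vk; rewrite !inE => /andP[uM /forallP fu] /andP[vM /forallP fv].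
case auv: (a u v).
  by move: (fu v); rewrite auv vM.
case avu: (a v u) => //.
by move: (fv u); rewrite avu uM.
Qed.


Lemma wt1 (D M : {set V}) : wt (fun _ => 1 : R) D M = (M == D)%:R.
Proof.
case: (boolP (M == D)) => [/eqP ->|MD].
  by apply: big1 => v _; case: ifP => ->; rewrite ?subrr.
case: (boolP [exists v, (v \in M) != (v \in D)]) => [/existsP [v hv]|/existsPn h].
  rewrite /wt (bigD1 v) //=; move: hv.
  by case: (v \in M); case: (v \in D) => //= _; rewrite ?subrr mul0r.
have MD2 : M = D by apply/setP => v; move: (h v); rewrite negbK => /eqP.
by rewrite MD2 eqxx in MD.
Qed.

Lemma gpi1 (x : V -> R) A S : gpi a (fun (_ : V -> R) (_ : V) => 1 : R) x A S =
  (S == keep a (A :&: Defs.support x))%:R.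
Proof.
rewrite /gpi (bigD1 (A :&: Defs.support x)) //= wt1 eqxx mul1r big1 ?addr0 //.
by move=> M /negbTE MD; rewrite wt1 MD mul0r.
Qed.

Lemma scale_facts (k : nat) (b : R) (x : V -> R) :
  (1 <= k)%N -> 0 <= b <= 1 -> scaleP (b / k%:R) (polyQ a k) x ->
  (forall v, 0 <= x v <= 1) /\ (forall v, x v + \sum_(u | a v u) x u <= b).
Proof.
move=> k1 /andP[b0 b1] [y [[y01 ysum] xe]].
have kpos : 0 < k%:R :> R by rewrite ltr0n.
have c0 : 0 <= b / k%:R by rewrite divr_ge0 // ltW.
have c1 : b / k%:R <= 1.
  rewrite ler_pdivrMr // mul1r (le_trans b1) //.
  by rewrite (ler_nat R 1 k).
split=> [v|v].
  rewrite xe; have /andP[h0 h1] := y01 v.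
  by rewrite mulr_ge0 //= mulr_ile1.
have -> : x v + \sum_(u | a v u) x u = b / k%:R * (y v + \sum_(u in Nout a v) y u).
  rewrite mulrDr mulr_sumr xe; congr (_ + _).
  by apply: eq_big => [u|u _]; rewrite ?inE ?xe.
have := ler_wpM2l c0 (ysum v).
rewrite (_ : b / k%:R * k%:R = b) //.
by rewrite divfK // gt_eqF.
Qed.


Definition m2 (x : V -> R) (v : V) : R :=
  if 0 < x v then (1 - expR (- x v)) / x v else 1.

Lemma m2_01 x v : 0 <= m2 x v <= 1.
Proof.
rewrite /m2; case: ifP => xp; last by rewrite ler01 lexx.
have e1 : expR (- x v) <= 1 by rewrite expR_le1 oppr_le0 ltW.
have e2 := expR_ge1Dx (- x v).
apply/andP; split.
  by apply: divr_ge0; [rewrite subr_ge0 | exact: ltW].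
rewrite ler_pdivrMr // mul1r.
by rewrite lerBlDr addrC -lerBlDr.
Qed.

Lemma m2_exp x v : 0 <= x v -> 1 - x v * m2 x v = expR (- x v).
Proof.
rewrite /m2 le_eqVlt => /orP[/eqP <-|xp]; last first.
  by rewrite xp mulrC divfK ?gt_eqF // subKr.
by rewrite ltxx mul0r subr0 oppr0 expR0.
Qed.

End Main.

Theorem theorem3 (R : realType) (V : finType) (e a : rel V) (k : nat) (b : R) :
  (1 <= k)%N -> simple_graph e -> certifying_orientation e a k ->
  0 <= b <= 1 ->
  (exists pi : scheme V R,
      balanced_CR e (polyQ a k) (b / k%:R) (1 - b) pi /\
      deterministic_scheme (b / k%:R) (polyQ a k) pi /\
      oblivious_scheme (b / k%:R) (polyQ a k) pi /\
      monotone_scheme (b / k%:R) (polyQ a k) pi) /\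
  (exists pi : scheme V R,
      balanced_CR e (polyQ a k) (b / k%:R) (expR (- b)) pi /\
      monotone_scheme (b / k%:R) (polyQ a k) pi).
Proof.
move=> k1 [esym eirr] [[ae aor] _] b01.
have airr : forall v, ~~ a v v.
  by move=> v; apply/negP => /ae; apply/negP.
have ori : orientation e a by [].
pose m1 := fun (_ : V -> R) (_ : V) => 1 : R.
have m1_01 : forall x v, 0 <= m1 x v <= 1 by move=> x v; rewrite ler01 lexx.
split.
  exists (gpi a m1); split; [split; [|split]|split; [|split]].
  - move=> x A _; split=> [S|]; first exact: gpi_ge0.
    exact: gpi_sum1.
  - by move=> x A S _; apply: gpi_valid.
  - move=> x i hx iS.
    have [x01 xs] := scale_facts k1 b01 hx.
    have xi : 0 < x i by move: iS; rewrite inE.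
    rewrite gpi_cond //; last by move=> v; case/andP: (x01 v).
    rewrite /m1 mulr1 mulrC mulKf ?gt_eqF //.
    under eq_bigr do rewrite mulr1.
    have W := weier (index_enum V) (fun j => a i j) x01.
    apply: le_trans W.
    rewrite lerB //; apply: le_trans (xs i).
    by rewrite lerDr; case/andP: (x01 i).
  - by move=> x A hx; exists (keep a (A :&: Defs.support x)) => S; rewrite gpi1.
  - split.
      by move=> x A hx; exists (keep a (A :&: Defs.support x)) => S; rewrite gpi1.
    move=> x y A hx hy sx sy S; rewrite !gpi1.
    by rewrite (setIidPl sx) (setIidPl sy).
  - by move=> x A1 A2 i _ iA sA; apply: gpi_mono.
exists (gpi a (@m2 R V)); split; [split; [|split]|].
- move=> x A _; split=> [S|]; first by apply: gpi_ge0; apply: m2_01.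
  by apply: gpi_sum1; apply: m2_01.
- by move=> x A S _; apply: gpi_valid => //; apply: m2_01.
- move=> x i hx iS.
  have [x01 xs] := scale_facts k1 b01 hx.
  have x0 : forall v, 0 <= x v by move=> v; case/andP: (x01 v).
  have xi : 0 < x i by move: iS; rewrite inE.
  rewrite (gpi_cond airr (@m2 R V) x0 iS).
  rewrite -mulrA mulrC mulKf ?gt_eqF //.
  under eq_bigr do rewrite m2_exp //.
  rewrite -expR_sum sumrN.
  set S := \sum_(j | a i j) x j.
  have hS : x i + S <= b := xs i.
  have E : expR (x i - b) <= expR (- S) by rewrite ler_expR; lra.
  have m0 : 0 <= m2 x i by case/andP: (m2_01 x i).
  apply: (le_trans _ (ler_wpM2l m0 E)).
  rewrite /m2 xi expRD mulrA ler_pMl ?expR_gt0 //.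
  rewrite mulrAC mulrBl mul1r expRN mulVf ?expR_eq0 //.
  rewrite ler_pdivlMr // mul1r.
  have := expR_ge1Dx (x i); lra.
- by move=> x A1 A2 i _ iA sA; apply: gpi_mono => //; apply: m2_01.
Qed.
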